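(* Let $r$ and $d$ be positive integers, $\operatorname{Tv}(d,r)=(d+1)(r-1)+1$, and let $S\subset\mathbb{R}^d$ be a set of $n>\operatorname{Tv}(d,r)$ points. Then the clique number of the Tverberg $r$-partition graph satisfies $\omega(G_T[S,r])=r$.
   Context: A partition of a finite set $S$ into $r$ parts is a collection of $r$ nonempty pairwise disjoint subsets $P_1,\dots,P_r$ (unordered) whose union is $S$. For a finite $S\subset\mathbb{R}^d$, a Tverberg partition of $S$ into $r$ parts is such a partition with $\bigcap_{j=1}^r\operatorname{conv}(P_j)\neq\emptyset$. For two partitions $P,P'$ of $S$, the partition distance $D(P,P')$ is the minimum number of elements of $S$ that must be removed so that $P$ and $P'$ restricted to the remaining elements coincide. The Tverberg $r$-partition graph $G_T[S,r]$ has as vertices all Tverberg partitions of $S$ into $r$ parts, with an edge between $P$ and $P'$ if and only if $D(P,P')=1$. The clique number $\omega(G)$ is the number of vertices of a largest complete subgraph of $G$. *)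

(* Defs.v *)
From HB Require Import structures.
From mathcomp Require Import all_boot all_order all_algebra.
From mathcomp Require Import reals.
Set Implicit Arguments. Unset Strict Implicit. Unset Printing Implicit Defensive.
Import Order.TTheory GRing.Theory Num.Theory.

(* A finite point set S ⊂ R^d with n points is given as an injective map
   p : 'I_n -> 'rV[R]_d (so S = image of p, and #|S| = n).  Partitions of S
   are identified with partitions of the index set 'I_n, i.e. sets of blocks
   P : {set {set 'I_n}} with [partition P] (nonempty pairwise disjoint blocks
   covering 'I_n); unordered by construction. *)

Section Tverberg.
Variables (R : realType) (d n : nat).
Local Open Scope ring_scope.

Definition in_conv (p : 'I_n -> 'rV[R]_d) (B : {set 'I_n}) (x : 'rV[R]_d) : Prop :=
  exists w : 'I_n -> R,
    [/\ forall i, 0 <= w i,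
        forall i, i \notin B -> w i = 0,
        \sum_i w i = 1
      & x = \sum_i w i *: p i].

Definition r_partition (r : nat) (P : {set {set 'I_n}}) : bool :=
  partition P [set: 'I_n] && (#|P| == r)%N.

Definition tverberg_partition (p : 'I_n -> 'rV[R]_d) (r : nat)
    (P : {set {set 'I_n}}) : Prop :=
  r_partition r P /\ exists x, forall B, B \in P -> in_conv p B x.

End Tverberg.

Section Dist.
Variable n : nat.

Definition restr (P : {set {set 'I_n}}) (X : {set 'I_n}) : {set {set 'I_n}} :=
  [set B :&: X | B in P] :\ set0.

(* partition distance: minimum number of elements Y to remove so that the
   restrictions to the remaining elements ~: Y coincide (Y = setT always works) *)
Definition partition_dist (P Q : {set {set 'I_n}}) : nat :=
  \big[minn/n]_(Y : {set 'I_n} | restr P (~: Y) == restr Q (~: Y)) #|Y|.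
End Dist.

Definition tverberg_clique (R : realType) (d n : nat) (p : 'I_n -> 'rV[R]_d)
    (r : nat) (C : {set {set {set 'I_n}}}) : Prop :=
  (forall P, P \in C -> tverberg_partition p r P) /\
  (forall P Q, P \in C -> Q \in C -> P != Q -> partition_dist P Q = 1%N).

Definition tverberg_clique_number_is (R : realType) (d n : nat)
    (p : 'I_n -> 'rV[R]_d) (r k : nat) : Prop :=
  (exists C, tverberg_clique p r C /\ #|C| = k) /\
  (forall C, tverberg_clique p r C -> (#|C| <= k)%N).

Definition Tv (d r : nat) : nat := ((d + 1) * (r - 1) + 1)%N.

(* Main.v *)
Require Import Defs.
From HB Require Import structures.
From mathcomp Require Import all_boot all_order all_algebra.
From mathcomp Require Import reals.
From mathcomp Require all_classical all_reals topology normedtype derive.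
From mathcomp.algebra_tactics Require ring lra.
Set Implicit Arguments. Unset Strict Implicit. Unset Printing Implicit Defensive.

Module AnaPart.
Import all_classical all_reals topology normedtype derive.
Import ring lra.
Import Order.TTheory GRing.Theory Num.Theory.
Import numFieldNormedType.Exports.
Local Open Scope classical_set_scope.
Local Open Scope ring_scope.

Section Ana.
Variable R : realType.

Lemma continuous_sum_seq (T : topologicalType) (I : Type) (s : seq I) (P : pred I)
   (f : I -> T -> R) :
  (forall i, continuous (f i)) -> continuous (fun x => \sum_(i <- s | P i) f i x).
Proof.
move=> cf; elim: s => [|a s IH].
  rewrite (_ : (fun x => _) = (fun=> 0)); first exact: cst_continuous.
  by apply: boolp.funext => x; rewrite big_nil.
case: (boolP (P a)) => Pa.
  rewrite (_ : (fun x => _) = (f a \+ (fun x => \sum_(i <- s | P i) f i x))).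
    by move=> x; apply: continuousD; [exact: cf|exact: IH].
  by apply: boolp.funext => x; rewrite big_cons Pa.
rewrite (_ : (fun x => _) = (fun x => \sum_(i <- s | P i) f i x)) //.
by apply: boolp.funext => x; rewrite big_cons (negbTE Pa).
Qed.

Lemma simplex_min N (g : 'rV[R]_N -> R) : (0 < N)%N -> continuous g ->
  exists l : 'rV[R]_N, [/\ (forall i, 0 <= l ord0 i), \sum_i l ord0 i = 1 &
     forall t : 'rV[R]_N, (forall i, 0 <= t ord0 i) -> \sum_i t ord0 i = 1 -> g l <= g t].
Proof.
move=> N0 cg.
pose A := [set v : 'rV[R]_N | forall i, `[0, 1]%classic (v ord0 i)].
pose B := [set v : 'rV[R]_N | \sum_i v ord0 i = 1].
have cA : compact A.
  have H := (@rV_compact R N (fun=> `[0, 1]%classic) (fun=> @segment_compact R 0 1)).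
  exact H.
have clB : closed B.
  have -> : B = (fun v : 'rV[R]_N => \sum_i v ord0 i) @^-1` [set 1] by [].
  apply: preimage_closed; last exact: closed_eq.
  move=> v _; apply: (@continuous_sum_seq _ _ _ _ (fun i (v : 'rV[R]_N) => v ord0 i)).
  by move=> i; exact: coord_continuous.
have cAB : compact (A `&` B) by apply: compact_closedI.
have ne : (A `&` B) !=set0.
  exists (\row_i (i == Ordinal N0)%:R); split.
    by move=> i; rewrite /= mxE in_itv /=; case: (_ == _) => /=; rewrite ?lexx ?ler01.
  rewrite /B /= (bigD1 (Ordinal N0)) //= big1 ?mxE ?eqxx ?addr0 // => i /negbTE.
  by rewrite mxE => ->.
have cg2 : {within A `&` B, continuous g} by apply: continuous_subspaceT.
have [l lAB lmin] := EVT_min_rV ne cAB cg2.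
rewrite inE in lAB; case: lAB => lA lB.
exists l; split => // [i|t t0 t1].
  by have := lA i; rewrite /= in_itv /= => /andP[].
apply: lmin; rewrite inE; split => // i; rewrite /= in_itv /= t0 /=.
rewrite -t1 (bigD1 i) //= lerDl; exact: sumr_ge0.
Qed.
End Ana.
Local Close Scope classical_set_scope.



Section LinDep.
Variable R : fieldType.
Lemma lin_dep (K : finType) N (t : 'I_N -> K -> R) : (#|K| < N)%N ->
  exists beta : 'I_N -> R, (exists i, beta i != 0) /\
    forall k, \sum_i beta i * t i k = 0.
Proof.
move=> hN.
pose M := \matrix_(i < N, k < #|K|) t i (enum_val k).
have ME : forall i k, M i k = t i (enum_val k) by move=> i k; rewrite mxE.
have rk : (0 < \rank (kermx M))%N.
  rewrite mxrank_ker subn_gt0; apply: leq_ltn_trans hN.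
  exact: rank_leq_col.
have : kermx M != 0 by apply: contraTneq rk => ->; rewrite mxrank0.
case/matrix0Pn => i0 [j0 hij].
exists (fun j => kermx M i0 j); split; first by exists j0.
move=> k.
have := congr1 (fun A : 'M_(N, #|K|) => A i0 (enum_rank k)) (mulmx_ker M).
rewrite /= mxE /= mxE => H; rewrite -[RHS]H.
by apply: eq_bigr => j _; rewrite ME enum_rankK.
Qed.
End LinDep.

Lemma fin_argmin (R : realDomainType) (I : finType) (i0 : I) (F : I -> R) :
  exists i, forall j, F i <= F j.
Proof.
by case: (@arg_minP _ R I i0 xpredT F isT) => i _ H; exists i => j; exact: H.
Qed.

Section CC.
Variables (R : realType) (K : finType) (N r : nat) (c : 'I_N -> 'I_r -> K -> R).
Hypothesis hc0 : forall i k, \sum_j c i j k = 0.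
Hypothesis hN : (#|K| < N)%N.
Hypothesis r0 : (0 < r)%N.

Definition vec (s : 'I_N -> 'I_r) (l : 'rV[R]_N) (k : K) :=
  \sum_i l ord0 i * c i (s i) k.
Definition dot (u v : K -> R) := \sum_k u k * v k.
Definition gg s l := dot (vec s l) (vec s l).
Definition inD (l : 'rV[R]_N) := (forall i, 0 <= l ord0 i) /\ \sum_i l ord0 i = 1.

Lemma dot_ge0 u : 0 <= dot u u.
Proof. by apply: sumr_ge0 => k _; rewrite -expr2 sqr_ge0. Qed.

Lemma eq_dot u u' v v' : (forall k, u k = u' k) -> (forall k, v k = v' k) ->
  dot u v = dot u' v'.
Proof. by move=> hu hv; apply: eq_bigr => k _; rewrite hu hv. Qed.

Lemma dot_vec s l u : dot u (vec s l) = \sum_i l ord0 i * dot u (c i (s i)).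
Proof.
rewrite /dot /vec.
under eq_bigr do rewrite mulr_sumr.
rewrite exchange_big /=; apply: eq_bigr => i _; rewrite mulr_sumr.
by apply: eq_bigr => k _; rewrite mulrCA.
Qed.

Lemma seg s mu k : inD mu ->
  dot (vec s mu) (c k (s k)) < dot (vec s mu) (vec s mu) ->
  exists mu', inD mu' /\ gg s mu' < gg s mu.
Proof.
move=> [mu0 mu1]; set x := vec s mu; set t := c k (s k) => hlt.
pose u := fun kk => t kk - x kk.
pose a := dot x t - dot x x.
pose b := dot u u.
have a0 : a < 0 by rewrite subr_lt0.
have b0 : 0 <= b by exact: dot_ge0.
have ba : 0 < b - a by rewrite subr_gt0; apply: lt_le_trans a0 b0.
pose e := - a / (b - a).
have e0 : 0 < e by rewrite divr_gt0 // oppr_gt0.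
have e1 : e <= 1 by rewrite ler_pdivrMr // mul1r; lra.
have eba : e * (b - a) = - a by rewrite /e mulfVK // gt_eqF.
pose mu' := \row_i ((1 - e) * mu ord0 i + e * (i == k)%:R).
have hv : forall kk, vec s mu' kk = x kk + e * u kk.
  move=> kk; rewrite /vec.
  under eq_bigr do rewrite mxE mulrDl.
  rewrite big_split /= [X in _ + X](bigD1 k) //= eqxx mulr1.
  rewrite [X in _ + (_ + X)]big1 ?addr0; last by move=> i /negbTE ->; rewrite mulr0 mul0r.
  rewrite (eq_bigr (fun i => (1 - e) * (mu ord0 i * c i (s i) kk))) => [|i _]; last by rewrite mulrA.
  have -> : \sum_i (1 - e) * (mu ord0 i * c i (s i) kk) = (1 - e) * x kk by rewrite -mulr_sumr.
  rewrite /u /t; ring.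
exists mu'; split.
  split => [i|]; first by rewrite mxE addr_ge0 // mulr_ge0 // ?subr_ge0 ?ler0n // ltW.
  under eq_bigr do rewrite mxE.
  rewrite big_split /= -mulr_sumr mu1 (bigD1 k) //= big1 => [|i /negbTE ->]; last by rewrite mulr0.
  by rewrite eqxx mulr1 addr0 mulr1 subrK.
rewrite /gg (eq_dot hv hv) /dot.
rewrite (eq_bigr (fun kk => x kk * x kk + e * (2 * (x kk * t kk - x kk * x kk)) + e ^+ 2 * (u kk * u kk))); last first.
  by move=> kk _; rewrite /u; ring.
rewrite !big_split /= -!mulr_sumr sumrB -/(dot x x) -/(dot x t) -/(dot u u) -/a -/b -/x.
suff : e * (2 * a) + e ^+ 2 * b < 0 by rewrite -/(dot x x); move=> h; rewrite -addrA gtrDl.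
have -> : e ^+ 2 * b = e * (e * (b - a)) + e ^+ 2 * a by ring.
rewrite eba; nra.
Qed.

Lemma colorful : exists (s : 'I_N -> 'I_r) (l : 'rV[R]_N),
  inD l /\ forall k, vec s l k = 0.
Proof.
have N0 : (0 < N)%N by apply: leq_ltn_trans hN.
have cont : forall s, continuous (gg s).
  move=> s; rewrite /gg /dot.
  apply: (@continuous_sum_seq _ _ _ _ _ (fun k l => vec s l k * vec s l k)) => k l.
  have cv : continuous (fun l => vec s l k).
    rewrite /vec; apply: (@continuous_sum_seq _ _ _ _ _ (fun i (l : 'rV[R]_N) => l ord0 i * c i (s i) k)).
    move=> i l'; apply: continuousM; first exact: coord_continuous.
    exact: cst_continuous.
  by apply: continuousM; apply: cv.
have ex : forall s : {ffun 'I_N -> 'I_r}, exists l, inD l /\ forall t, inD t -> gg s l <= gg s t.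
  move=> s; have [l [l0 l1 lm]] := simplex_min N0 (cont s).
  by exists l; split => // t [t0 t1]; exact: lm.
have [f hf] := boolp.choice ex.
have [ss hss] := fin_argmin [ffun=> Ordinal r0] (fun s => gg s (f s)).
set l := f ss; have [lD lmin] := hf ss.
have glob : forall (s : {ffun 'I_N -> 'I_r}) t, inD t -> gg ss l <= gg s t.
  by move=> s t tD; apply: le_trans (hss s) _; exact: (hf s).2 t tD.
exists ss, l; split => //.
set x := vec ss l.
suff : dot x x = 0.
  move/eqP; rewrite psumr_eq0 => [/allP H k|k _]; last by rewrite -expr2 sqr_ge0.
  by have := H k (mem_index_enum _); rewrite mulf_eq0 orbb => /eqP.
apply/eqP; apply: contraT => hx0.
have hx : 0 < dot x x by rewrite lt_def hx0 dot_ge0.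
have st2 : forall i, dot x x <= dot x (c i (ss i)).
  move=> i; rewrite leNgt; apply/negP => hlt.
  have [mu' [muD hmu]] := seg lD hlt.
  by have := le_lt_trans (glob _ _ muD) hmu; rewrite ltxx.
have [mu [k [muD [muk mux]]]] : exists mu k, inD mu /\ mu ord0 k = 0 /\
    forall kk, vec ss mu kk = x kk.
  case: (boolP [exists k, l ord0 k == 0]).
    by move/existsP => [k /eqP lk]; exists l, k.
  rewrite negb_exists => /forallP lpos'.
  have lpos : forall i, 0 < l ord0 i by move=> i; rewrite lt_def lpos' lD.1.
  have eq : forall i, dot x (c i (ss i)) = dot x x.
    have S : \sum_i l ord0 i * (dot x (c i (ss i)) - dot x x) = 0.
      under eq_bigr do rewrite mulrBr.
      rewrite sumrB -mulr_suml lD.2 mul1r -dot_vec -/x; exact: subrr.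
    have hge : forall i, true -> 0 <= l ord0 i * (dot x (c i (ss i)) - dot x x).
      by move=> i _; apply: mulr_ge0; [exact: lD.1 | rewrite subr_ge0; exact: st2].
    move=> i; have := @psumr_eq0P _ _ _ _ hge S i isT.
    by move/eqP; rewrite mulf_eq0 (gt_eqF (lpos i)) /= subr_eq0 => /eqP.
  have [be [[i1 hi1] hbe]] := lin_dep (fun i => c i (ss i)) hN.
  have sbe : \sum_i be i = 0.
    have : \sum_i be i * dot x (c i (ss i)) = 0.
      rewrite /dot; under eq_bigr do rewrite mulr_sumr.
      rewrite exchange_big /= big1 // => kk _.
      rewrite (eq_bigr (fun i => x kk * (be i * c i (ss i) kk))) => [|i _]; last by rewrite mulrCA.
      by rewrite -mulr_sumr hbe mulr0.
    under eq_bigr do rewrite eq.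
    by rewrite -mulr_suml => /eqP; rewrite mulf_eq0 (negbTE hx0) orbF => /eqP.
  have [ip hip] : exists i, 0 < be i.
    case: (boolP [exists i, 0 < be i]) => [/existsP//|]; rewrite negb_exists => /forallP hn.
    have hn' : forall i, 0 <= - be i by move=> i; rewrite oppr_ge0 leNgt hn.
    have : \sum_i - be i = 0 by rewrite sumrN sbe oppr0.
    move/(psumr_eq0P (fun i _ => hn' i)) => /(_ i1 isT) /eqP.
    by rewrite oppr_eq0 (negbTE hi1).
  have [k hk] := fin_argmin i1 (fun i => - (be i / l ord0 i)).
  set M := be k / l ord0 k.
  have Mge : forall i, be i / l ord0 i <= M by move=> i; rewrite -lerN2 hk.
  have Mpos : 0 < M by apply: lt_le_trans (Mge ip); rewrite divr_gt0.
  have bk : be k != 0 by apply: contraTneq Mpos; rewrite /M => ->; rewrite mul0r ltxx.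
  exists (\row_i (l ord0 i - be i / M)), k; split; last split.
  - split => [i|].
      rewrite mxE subr_ge0 ler_pdivrMr // -ler_pdivrMl //.
      by rewrite mulrC; apply: Mge.
    under eq_bigr do rewrite mxE.
    by rewrite sumrB -mulr_suml sbe mul0r subr0 lD.2.
  - rewrite mxE /M; field.
    by rewrite bk /= gt_eqF.
  - move=> kk; rewrite /vec.
    under eq_bigr do rewrite mxE mulrBl.
    rewrite sumrB -/(vec ss l kk) -/x.
    rewrite (eq_bigr (fun i => M^-1 * (be i * c i (ss i) kk))) => [|i _]; last first.
      by rewrite [be i / M]mulrC -mulrA.
    by rewrite -mulr_sumr hbe mulr0 subr0.
have [j hj] : exists j, dot x (c k j) <= 0.
  case: (boolP [exists j, dot x (c k j) <= 0]) => [/existsP//|]; rewrite negb_exists => /forallP hn.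
  have : \sum_j dot x (c k j) = 0.
    rewrite /dot exchange_big /= big1 // => kk _.
    by rewrite -mulr_sumr hc0 mulr0.
  rewrite (bigD1 (ss k)) //= => /eqP; rewrite gt_eqF // ltr_pwDl //.
    by rewrite ltNge hn.
  by apply: sumr_ge0 => j' _; apply: ltW; rewrite ltNge hn.
pose s' := [ffun i => if i == k then j else ss i].
have v' : forall kk, vec s' mu kk = x kk.
  move=> kk; rewrite -mux /vec; apply: eq_bigr => i _; rewrite ffunE.
  by case: (eqVneq i k) => [->|//]; rewrite muk !mul0r.
have hlt : dot (vec s' mu) (c k (s' k)) < dot (vec s' mu) (vec s' mu).
  rewrite (eq_dot v' (fun _ => erefl)) (eq_dot v' v') ffunE eqxx.
  by apply: le_lt_trans hj hx.
have [mu' [mu'D hmu']] := seg muD hlt.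
have : gg s' mu = gg ss l by rewrite /gg (eq_dot v' v').
move=> e; rewrite e in hmu'.
by have := lt_le_trans hmu' (glob s' mu' mu'D); rewrite ltxx.
Qed.

End CC.



Lemma sum_ind (R : pzRingType) (I : finType) (a : I) : \sum_(j : I) (j == a)%:R = 1 :> R.
Proof.
rewrite (bigD1 a) //= eqxx big1 ?addr0 // => j /negbTE ->; exact: mulr0n.
Qed.

Lemma tverberg (R : realType) (d r m : nat) (q : 'I_m -> 'rV[R]_d) :
  (0 < r)%N -> (Tv d r <= m)%N ->
  exists s : 'I_m -> 'I_r, (forall j, exists i, s i = j) /\
    exists x, forall j, in_conv q [set i | s i == j] x.
Proof.
case: r => // r' _ hm.
pose K := (option 'I_d * 'I_r')%type.
have hK : (#|{: K}| < m)%N.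
  rewrite card_prod card_option !card_ord; move: hm; rewrite /Tv subSS subn0 addn1.
  by rewrite addn1.
pose y (i : 'I_m) (a : option 'I_d) : R := if a is Some a' then q i ord0 a' else 1.
pose w (j : 'I_r'.+1) (b : 'I_r') : R :=
  (j == widen_ord (leqnSn r') b)%:R - (j == ord_max)%:R.
pose c (i : 'I_m) (j : 'I_r'.+1) (k : K) := y i k.1 * w j k.2.
have hc0 : forall i k, \sum_j c i j k = 0.
  move=> i k; rewrite /c -mulr_sumr /w sumrB !sum_ind subrr; exact: mulr0.
have [s [l [[l0 l1] hv]]] := colorful hc0 hK (ltn0Sn r').
pose Z j a := \sum_i l ord0 i * y i a * (s i == j)%:R.
have hZ : forall j a, Z j a = Z ord_max a.
  move=> j a; case: (eqVneq j ord_max) => [->//|hj].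
  have jr : (j < r')%N.
    by have := ltn_ord j; rewrite ltnS leq_eqVlt => /orP[/eqP hh|//]; case/eqP: hj; apply: val_inj.
  have := hv (a, Ordinal jr); rewrite /vec /c /w /=.
  have -> : widen_ord (leqnSn r') (Ordinal jr) = j by apply: val_inj.
  under eq_bigr do rewrite mulrBr mulrBr.
  rewrite sumrB => /eqP; rewrite subr_eq0 => /eqP.
  rewrite /Z => h; rewrite (eq_bigr (fun i => l ord0 i * (y i a * (s i == j)%:R))) ?h; last by move=> i _; rewrite mulrA.
  by apply: eq_bigr => i _; rewrite mulrA.
have hZN : forall j, Z j None = \sum_i l ord0 i * (s i == j)%:R.
  by move=> j; apply: eq_bigr => i _; rewrite mulr1.
pose z := Z ord_max None.
have sZ : \sum_j Z j None = 1.
  under eq_bigr do rewrite hZN.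
  rewrite exchange_big /= -[RHS]l1; apply: eq_bigr => i _.
  by rewrite -mulr_sumr (eq_bigr (fun j => (j == s i)%:R)) ?sum_ind ?mulr1 // => j _; rewrite eq_sym.
have z0 : 0 < z.
  move: sZ; under eq_bigr do rewrite hZ; rewrite sumr_const card_ord -mulr_natr => hz.
  have hr : (r'.+1%:R : R) != 0 by rewrite pnatr_eq0.
  have -> : z = (r'.+1%:R)^-1 by rewrite -[LHS]mulr1 -[X in z * X](mulfV hr) mulrA hz mul1r.
  by rewrite invr_gt0 ltr0Sn.
exists s; split.
  move=> j; case: (pickP (fun i => s i == j)) => [i /eqP hi|hn]; first by exists i.
  exfalso; have := z0; rewrite /z -(hZ j) hZN big1 ?ltxx // => i _.
  by rewrite hn mulr0.
exists (\row_a (Z ord_max (Some a) / z)) => j.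
exists (fun i => l ord0 i * (s i == j)%:R / z); split.
- by move=> i; rewrite divr_ge0 ?mulr_ge0 ?ler0n // ltW.
- by move=> i; rewrite inE => /negbTE ->; rewrite mulr0 mul0r.
- by rewrite -mulr_suml -hZN hZ mulfV // gt_eqF.
- apply/rowP => a; rewrite mxE summxE -(hZ j) /Z mulr_suml.
  by apply: eq_bigr => i _; rewrite mxE /=; ring.
Qed.

End AnaPart.

Module CombPart.
Import Order.TTheory GRing.Theory Num.Theory.

Lemma bigmin_le (I : finType) (P : pred I) (F : I -> nat) (m : nat) i :
  P i -> (\big[minn/m]_(j | P j) F j <= F i)%N.
Proof.
move=> Pi; rewrite unlock.
have : i \in index_enum I by rewrite mem_index_enum.
elim: (index_enum I) => // a s IH; rewrite inE /= => /orP[/eqP <-|/IH h].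
  by rewrite Pi geq_minl.
by case: (P a) => //; exact: leq_trans (geq_minr _ _) h.
Qed.

Section Comb.
Variable n : nat.
Implicit Types (P Q : {set {set 'I_n}}) (x y i j a : 'I_n).

Definition part P := partition P [set: 'I_n].

Lemma pb_mem P i : part P -> pblock P i \in P.
Proof. by move=> hP; apply: pblock_mem; rewrite (cover_partition hP) inE. Qed.

Lemma pb_in P i : part P -> i \in pblock P i.
Proof. by move=> hP; rewrite mem_pblock (cover_partition hP) inE. Qed.

Lemma pb_def P B i : part P -> B \in P -> i \in B -> pblock P i = B.
Proof. by move=> hP; apply: def_pblock; exact: partition_trivIset hP. Qed.

Lemma pb_same P i j : part P -> j \in pblock P i -> pblock P j = pblock P i.
Proof. by move=> hP; apply: same_pblock; exact: partition_trivIset hP. Qed.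

Lemma pb_sym P i j : part P -> (j \in pblock P i) = (i \in pblock P j).
Proof.
by move=> hP; apply/idP/idP => h; rewrite (pb_same hP h) pb_in.
Qed.

Lemma pb_nonempty P B : part P -> B \in P -> exists i, i \in B.
Proof.
move=> hP hB; case: (set_0Vmem B) => [B0|[i hi]]; last by exists i.
by move: hB; rewrite B0 (partition0 hP).
Qed.

Lemma part_eq1 P Q : part P -> part Q ->
  (forall i j, (j \in pblock P i) = (j \in pblock Q i)) -> {subset P <= Q}.
Proof.
move=> hP hQ h B hB; have [i hi] := pb_nonempty hP hB.
rewrite -(pb_def hP hB hi).
have -> : pblock P i = pblock Q i by apply/setP => j; rewrite h.
exact: pb_mem.
Qed.

Lemma part_eq P Q : part P -> part Q ->
  (forall i j, (j \in pblock P i) = (j \in pblock Q i)) -> P = Q.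
Proof.
move=> hP hQ h; apply/setP => B; apply/idP/idP; first exact: part_eq1.
by apply: part_eq1 => // i j; rewrite h.
Qed.

Definition agree P Q x := forall i j, i != x -> j != x ->
  (j \in pblock P i) = (j \in pblock Q i).

Definition adj P Q x := restr P (~: [set x]) = restr Q (~: [set x]).

Lemma restr_mem P X B : B \in restr P X = (B != set0) && [exists C in P, B == C :&: X].
Proof.
rewrite /restr !inE; congr (_ && _); apply/imsetP/existsP => [[C hC ->]|[C /andP[hC /eqP ->]]].
  by exists C; rewrite hC eqxx.
by exists C.
Qed.

Lemma adj_agree P Q x : part P -> part Q -> adj P Q x -> agree P Q x.
Proof.
move=> hP hQ hadj.
suff H : forall P Q, part P -> part Q -> adj P Q x ->
    forall i j, i != x -> j != x -> j \in pblock P i -> j \in pblock Q i.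
  by move=> i j hi hj; apply/idP/idP; apply: H => //.
move=> {}P {}Q {}hP {}hQ {}hadj i j hi hj hj'.
have : pblock P i :&: ~: [set x] \in restr P (~: [set x]).
  rewrite restr_mem; apply/andP; split.
    by apply/set0Pn; exists i; rewrite !inE hi pb_in.
  by apply/existsP; exists (pblock P i); rewrite pb_mem ?eqxx.
rewrite hadj restr_mem => /andP[_ /existsP[C /andP[hC /eqP hPC]]].
have iC : i \in C.
  have : i \in pblock P i :&: ~: [set x] by rewrite !inE hi pb_in.
  by rewrite hPC inE => /andP[].
rewrite (pb_def hQ hC iC).
have : j \in pblock P i :&: ~: [set x] by rewrite !inE hj hj'.
by rewrite hPC inE => /andP[].
Qed.
Lemma restr_imset P X : restr P X = [set B :&: X | B in P] :\ set0.
Proof. by []. Qed.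

Lemma blk_single P B x : part P -> B \in P -> B :&: ~: [set x] = set0 -> B = [set x].
Proof.
move=> hP hB h0; have [i hi] := pb_nonempty hP hB.
have hx : forall j, j \in B -> j = x.
  move=> j hj; apply/eqP; apply: contraT => hjx.
  have : j \in B :&: ~: [set x] by rewrite !inE hjx hj.
  by rewrite h0 inE.
have xB : x \in B by rewrite -(hx i hi).
by apply/setP => j; rewrite inE; apply/idP/eqP => [/hx|->].
Qed.

Lemma card_restr_lt P x : part P -> [set x] \in P ->
  (#|restr P (~: [set x])| < #|P|)%N.
Proof.
move=> hP hx; rewrite restr_imset.
have h0 : set0 \in [set B :&: ~: [set x] | B in P].
  by apply/imsetP; exists [set x] => //; apply/setP => j; rewrite !inE; case: (j == x).
apply: leq_trans (leq_imset_card (fun B : {set 'I_n} => B :&: ~: [set x]) P).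
by rewrite [X in (_ <= X)%N](cardsD1 set0) h0.
Qed.

Lemma card_restr_ge P x : part P -> [set x] \notin P ->
  (#|P| <= #|restr P (~: [set x])|)%N.
Proof.
move=> hP hx; rewrite restr_imset.
have h0 : set0 \notin [set B :&: ~: [set x] | B in P].
  apply/imsetP => [[B hB /esym/(blk_single hP hB) hB1]].
  by move: hx; rewrite -hB1 hB.
have -> : [set B :&: ~: [set x] | B in P] :\ set0 = [set B :&: ~: [set x] | B in P].
  by apply/setP => B; rewrite !inE; case: eqP => // ->; rewrite (negbTE h0).
rewrite card_in_imset // => B C hB hC hBC.
case: (set_0Vmem (B :&: ~: [set x])) => [hB0|[i hi]].
  by move: hx; rewrite -(blk_single hP hB hB0) hB.
have iB : i \in B by move: hi; rewrite inE => /andP[].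
have iC : i \in C by move: hi; rewrite hBC inE => /andP[].
by rewrite -(pb_def hP hB iB) (pb_def hP hC iC).
Qed.

Lemma adj_single P Q x : part P -> part Q -> #|P| = #|Q| -> adj P Q x ->
  [set x] \in P -> [set x] \in Q.
Proof.
move=> hP hQ hc hadj hx; apply: contraT => hQx.
have := card_restr_ge hQ hQx; rewrite -hadj -hc => h.
by have := leq_trans (card_restr_lt hP hx) h; rewrite ltnn.
Qed.

Lemma single_pb P x : part P -> [set x] \in P -> pblock P x = [set x].
Proof. by move=> hP hx; apply: pb_def => //; rewrite inE. Qed.

Lemma adj_nsingle P Q x : part P -> part Q -> #|P| = #|Q| -> adj P Q x ->
  P != Q -> [set x] \notin P.
Proof.
move=> hP hQ hc hadj hPQ; apply/negP => hx.
have hx' := adj_single hP hQ hc hadj hx.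
have hag := adj_agree hP hQ hadj.
case/eqP: hPQ; apply: part_eq => // i j.
case: (eqVneq i x) => [->|hi].
  by rewrite !single_pb.
case: (eqVneq j x) => [->|hj]; last exact: hag.
by rewrite pb_sym // [in RHS]pb_sym // !single_pb // !inE (negbTE hi).
Qed.

Definition mv P1 P x := [/\ agree P P1 x, pblock P x :\ x \in P1 &
  exists2 a, a \in pblock P1 x & a != x].

Lemma agree_sym P Q x : agree P Q x -> agree Q P x.
Proof. by move=> h i j hi hj; rewrite h. Qed.

Lemma mv_of P1 P x : part P1 -> part P -> #|P| = #|P1| -> adj P P1 x -> P != P1 ->
  mv P1 P x.
Proof.
move=> hP1 hP hc hadj hne.
have hag := adj_agree hP hP1 hadj.
have nP := adj_nsingle hP hP1 hc hadj hne.
have nP1 : [set x] \notin P1.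
  by apply: adj_nsingle hP1 hP (esym hc) (esym hadj) _; rewrite eq_sym.
have ex2 : forall Q, part Q -> [set x] \notin Q -> exists2 a, a \in pblock Q x & a != x.
  move=> Q hQ nQ.
  case: (pickP (fun a => (a \in pblock Q x) && (a != x))) => [a /andP[]|hn]; first by exists a.
  suff hQx : pblock Q x = [set x] by move: nQ; rewrite -hQx pb_mem.
  apply/setP => a; rewrite inE; apply/idP/eqP => [ha|->]; last exact: pb_in.
  by apply/eqP; apply: contraFT (hn a) => hax; rewrite ha.
split => //; last exact: ex2.
have [a0 ha0 a0x] := ex2 P hP nP.
have hpa : forall a, a != x -> (a \in pblock P x) = (a \in pblock P1 a0).
  by move=> a hax; rewrite -(pb_same hP ha0) hag.
have nx : x \notin pblock P1 a0.
  apply/negP => hx; case/eqP: hne; apply: part_eq => // i j.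
  have e1 : pblock P1 a0 = pblock P1 x by rewrite (pb_same hP1 hx).
  have hxj : forall j, (j \in pblock P x) = (j \in pblock P1 x).
    move=> j'; case: (eqVneq j' x) => [->|hj']; first by rewrite !pb_in.
    by rewrite hpa // e1.
  case: (eqVneq i x) => [->|hi]; first exact: hxj.
  case: (eqVneq j x) => [->|hj]; last exact: hag.
  by rewrite pb_sym // [RHS]pb_sym // hxj.
have -> : pblock P x :\ x = pblock P1 a0.
  apply/setP => a; rewrite !inE; case: (eqVneq a x) => [->|hax] /=.
    by rewrite (negbTE nx).
  by rewrite hpa.
exact: pb_mem.
Qed.

Lemma mv_B Q z a : a != z -> (a \in pblock Q z) = (a \in pblock Q z :\ z).
Proof. by move=> h; rewrite !inE h. Qed.

Lemma det P1 P P' x : part P -> part P' -> agree P P1 x -> agree P' P1 x ->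
  pblock P x :\ x = pblock P' x :\ x -> P = P'.
Proof.
move=> hP hP' h h' hB.
have hxj : forall j, (j \in pblock P x) = (j \in pblock P' x).
  move=> j; case: (eqVneq j x) => [->|hj]; first by rewrite !pb_in.
  by rewrite (mv_B P hj) (mv_B P' hj) hB.
apply: part_eq => // i j.
case: (eqVneq i x) => [->|hi]; first exact: hxj.
case: (eqVneq j x) => [->|hj]; last by rewrite h // h'.
by rewrite pb_sym // [RHS]pb_sym // hxj.
Qed.

Section Pair.
Variables (P1 P P' : {set {set 'I_n}}) (x y w : 'I_n).
Hypotheses (hP1 : part P1) (hP : part P) (hP' : part P').
Hypotheses (mP : mv P1 P x) (mP' : mv P1 P' y) (xy : x != y) (hw : agree P P' w).

Lemma mv_disj Q z a : mv P1 Q z -> a \in pblock Q z :\ z -> a \notin pblock P1 z.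
Proof.
case=> _ hB _ ha; apply/negP => haz.
have e1 := pb_def hP1 hB ha.
have e2 := pb_same hP1 haz.
have : z \in pblock Q z :\ z by rewrite -e1 e2 pb_in.
by rewrite !inE eqxx.
Qed.


Lemma half : w != x.
Proof.
apply/negP => /eqP ewx; have hwx : agree P P' x by rewrite -ewx.
have yx : y != x by rewrite eq_sym.
case: mP => ag _ _; case: mP' => ag' hB' [a haA' hay].
have key : forall a, a != x -> a != y -> a \in pblock P' y :\ y -> False.
  move=> b hbx hby hb.
  have : b \in pblock P1 y by rewrite -ag // hwx // (mv_B _ hby).
  by apply/negP; apply: (mv_disj mP').
have [b hb] := pb_nonempty hP1 hB'.
have hby : b != y by move: hb; rewrite !inE => /andP[].
have ebx : b = x by apply/eqP; apply: contraT => hbx; case: (key b hbx hby hb).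
have eax : a = x.
  apply/eqP; apply: contraT => hax; exfalso; apply: (key a hax hay).
  by rewrite -mv_B // -hwx // ag.
by move: (mv_disj mP' hb); rewrite ebx -{1}eax haA'.
Qed.
Lemma side (wx : w != x) (wy : w != y) : [/\ w \in pblock P x :\ x,
  (forall b, b \in pblock P x :\ x -> b = w), y \in pblock P1 x &
  (forall a, a \in pblock P1 x -> (a == x) || (a == y))].
Proof.
case: mP => ag hB [a0 ha0 ha0x]; case: mP' => ag' hB' [a1 ha1 ha1y].
have yx : y != x by rewrite eq_sym.
have xw : x != w by rewrite eq_sym.
have out : forall a, a != x -> a != y -> a != w ->
    (a \notin pblock P x :\ x) && (a \notin pblock P1 x).
  move=> a hax hay haw.
  have e : (a \in pblock P x :\ x) = (a \in pblock P1 x).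
    by rewrite -mv_B // hw // ag'.
  case hin : (a \in pblock P x :\ x).
    by have := mv_disj mP hin; rewrite -e hin.
  by rewrite -e hin.
have disj : forall a, a \in pblock P x :\ x -> a \notin pblock P1 x.
  by move=> a; apply: mv_disj mP.
have nyB : y \notin pblock P x :\ x.
  apply/negP => yB.
  have e1 := pb_def hP1 hB yB.
  have a1B : a1 \in pblock P x :\ x by rewrite -e1.
  have a1x : a1 != x by move: a1B; rewrite !inE => /andP[].
  have ea1 : a1 = w.
    apply/eqP; apply: contraT => h.
    by have := out a1 a1x ha1y h; rewrite a1B.
  have wB : w \in pblock P x :\ x by rewrite -ea1.
  have a0B : a0 \notin pblock P x :\ x by apply: contraL ha0; apply: disj.
  have a0y : a0 != y by apply: contraNneq a0B => ->.
  have a0w : a0 != w by apply: contraNneq a0B => ->.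
  by have := out a0 ha0x a0y a0w; rewrite ha0 andbF.
have allw : forall b, b \in pblock P x :\ x -> b = w.
  move=> b hb; apply/eqP; apply: contraT => hbw.
  have hbx : b != x by move: hb; rewrite !inE => /andP[].
  have hby : b != y by apply: contraNneq nyB => <-.
  by have := out b hbx hby hbw; rewrite hb.
have wB : w \in pblock P x :\ x.
  by have [b hb] := pb_nonempty hP1 hB; rewrite -(allw b hb).
have Aw : w \notin pblock P1 x by apply: disj.
split => //.
  have a0w : a0 != w by apply: contraNneq Aw => <-.
  have -> : y = a0 => //.
  apply/eqP; rewrite eq_sym; apply: contraT => h.
  by have := out a0 ha0x h a0w; rewrite ha0 andbF.
move=> a ha; case: (eqVneq a x) => //= hax; apply/eqP/eqP; apply: contraT => hay.
have haw : a != w by apply: contraNneq Aw => <-.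
by have := out a hax hay haw; rewrite ha andbF.
Qed.

End Pair.

Lemma pair_main P1 P P' x y w : part P1 -> mv P1 P x -> mv P1 P' y -> x != y ->
  agree P P' w ->
  [/\ pblock P x :\ x = pblock P' y :\ y, y \in pblock P1 x,
      (forall a, a \in pblock P1 x -> (a == x) || (a == y)) &
      (forall b, b \in pblock P x :\ x -> b = w)].
Proof.
move=> hP1 mP mP' xy hw.
have yx : y != x by rewrite eq_sym.
have wx := half hP1 mP mP' xy hw.
have wy := half hP1 mP' mP yx (agree_sym hw).
have [wB allw yA Aall] := side hP1 mP mP' xy hw wx wy.
have [wB' _ _ _] := side hP1 mP' mP yx (agree_sym hw) wy wx.
split => //; case: mP => _ hB _; case: mP' => _ hB' _.
by rewrite -(pb_def hP1 hB wB) (pb_def hP1 hB' wB').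
Qed.

Lemma restr_setT P : part P -> restr P (~: set0) = P.
Proof.
move=> hP; rewrite restr_imset setC0.
apply/setP => B; rewrite !inE; apply/andP/idP => [[_ /imsetP[C hC ->]]|hB].
  by rewrite setIT.
split; first by apply/eqP => B0; move: hB; rewrite B0 (partition0 hP).
by apply/imsetP; exists B => //; rewrite setIT.
Qed.

Lemma dist_adj P Q : (1 < n)%N -> partition_dist P Q = 1%N -> exists x, adj P Q x.
Proof.
move=> n1 hd.
have H : (partition_dist P Q = n) \/ exists Y : {set 'I_n},
    restr P (~: Y) == restr Q (~: Y) /\ partition_dist P Q = #|Y|.
  rewrite /partition_dist; apply: (big_ind (fun m => m = n \/ exists Y : {set 'I_n},
    restr P (~: Y) == restr Q (~: Y) /\ m = #|Y|)) => [|a b ha hb|Y hY]; first by left.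
    by case: (leqP a b).
  by right; exists Y.
case: H => [h|[Y [hY hc]]].
  have : (1 < partition_dist P Q)%N by rewrite h.
  by rewrite hd.
move: hc; rewrite hd => /esym/eqP/cards1P[x hx].
by exists x; apply/eqP; rewrite -hx.
Qed.

Lemma adj_dist P Q x : (0 < n)%N -> part P -> part Q -> P != Q -> adj P Q x ->
  partition_dist P Q = 1%N.
Proof.
move=> n0 hP hQ hne hadj; apply/eqP; rewrite eqn_leq; apply/andP; split.
  rewrite -[X in (_ <= X)%N](cards1 x); apply: bigmin_le.
  by apply/eqP.
rewrite /partition_dist; apply: (big_ind (fun m => 0 < m)%N) => // [a b ha hb|Y hY].
  by rewrite leq_min ha hb.
rewrite card_gt0; apply: contraNneq hne => Y0; move: hY; by rewrite Y0 !restr_setT // => /eqP.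

Qed.

Lemma clique_bound (r : nat) (C : {set {set {set 'I_n}}}) : (1 < n)%N ->
  (r = 2 -> 3 < n)%N ->
  (forall P, P \in C -> r_partition r P) ->
  (forall P Q, P \in C -> Q \in C -> P != Q -> partition_dist P Q = 1%N) ->
  (#|C| <= r)%N.
Proof.
move=> n1 n3 hC hD.
case: (set_0Vmem C) => [->|[P1 hP1C]]; first by rewrite cards0.
have hpart : forall P, P \in C -> part P /\ #|P| = r.
  by move=> P /hC /andP[h /eqP]; split.
have [hP1 cP1] := hpart P1 hP1C.
have inC : forall P, P \in C :\ P1 -> [/\ P \in C, P != P1, part P & #|P| = #|P1|].
  move=> P; rewrite !inE => /andP[h1 h2]; have [h3 h4] := hpart P h2.
  by split => //; rewrite h4 cP1.
have hex : forall P, P \in C :\ P1 -> exists x, adj P P1 x.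
  by move=> P /inC[h1 h2 _ _]; apply: dist_adj => //; apply: hD.
have hmv : forall P x, P \in C :\ P1 -> adj P P1 x -> mv P1 P x.
  by move=> P x /inC[h1 h2 h3 h4] ha; apply: mv_of.
have hag : forall P Q, P \in C -> Q \in C -> P != Q -> exists w, agree P Q w.
  move=> P Q hP hQ hPQ; have [w hw] := dist_adj n1 (hD P Q hP hQ hPQ).
  by exists w; apply: adj_agree hw; [exact: (hpart P hP).1 | exact: (hpart Q hQ).1].
have A1 : pblock P1 (Ordinal (ltnW n1)) \in P1 by apply: pb_mem.
have r0 : (0 < r)%N by rewrite -cP1 card_gt0; apply/set0Pn; exists (pblock P1 (Ordinal (ltnW n1))).
rewrite (cardsD1 P1 C) hP1C add1n.
case: (boolP [exists x, [forall P in C :\ P1, restr P (~: [set x]) == restr P1 (~: [set x])]]).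
  move/existsP => [x /forall_inP hx].
  have hA : pblock P1 x \in P1 by apply: pb_mem.
  pose f P := pblock P x :\ x.
  have inj : {in C :\ P1 &, injective f}.
    move=> P Q hP hQ; have [h1 _ hpP _] := inC P hP; have [h1' _ hpQ _] := inC Q hQ.
    have [agP _ _] := hmv P x hP (eqP (hx P hP)).
    have [agQ _ _] := hmv Q x hQ (eqP (hx Q hQ)).
    exact: (det hpP hpQ agP agQ).
  have sub : f @: (C :\ P1) \subset P1 :\ pblock P1 x.
    apply/subsetP => B /imsetP[P hP ->]; have [_ hB _] := hmv P x hP (eqP (hx P hP)).
    rewrite !inE hB andbT; apply/eqP => e.
    by have := pb_in x hP1; rewrite -e !inE eqxx.
  have := subset_leq_card sub; rewrite card_in_imset // => h.
  by apply: leq_ltn_trans h _; rewrite -cP1 (cardsD1 (pblock P1 x) P1) hA.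
rewrite negb_exists => /forallP hns.
case: (set_0Vmem (C :\ P1)) => [->|[P hP]]; first by rewrite cards0.
have [x hx] := hex P hP.
have /forall_inPn [P' hP' hn] := hns x.
have [y hy] := hex P' hP'.
have xy : x != y by apply: contraNneq hn => ->; apply/eqP.
have [hPC hPne hPp _] := inC P hP; have [hP'C hP'ne hP'p _] := inC P' hP'.
have PP' : P != P' by apply: contraNneq hn => <-; apply/eqP.
have mP := hmv P x hP hx; have mP' := hmv P' y hP' hy.
have [w hw] := hag P P' hPC hP'C PP'.
have [eB yA Aall Ball] := pair_main hP1 mP mP' xy hw.
have r3 : (2 < r)%N.
  case: mP => _ hB _.
  have AB : pblock P1 x != pblock P x :\ x.
    by apply/eqP => e; have := pb_in x hP1; rewrite e !inE eqxx.
  have sub2 : [set pblock P1 x; pblock P x :\ x] \subset P1.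
    by apply/subsetP => B; rewrite !inE => /orP[/eqP->|/eqP->] //; apply: pb_mem.
  have := subset_leq_card sub2; rewrite cards2 AB cP1 => r2.
  rewrite ltnNge; apply/negP => r2'.
  have er : r = 2 by apply/eqP; rewrite eqn_leq r2 r2'.
  have eP1 : [set pblock P1 x; pblock P x :\ x] = P1.
    by apply/eqP; rewrite eqEcard sub2 cards2 AB cP1 er.
  have cov : forall i, (i == x) || (i == y) || (i == w).
    move=> i; have : i \in cover P1 by rewrite (cover_partition hP1) inE.
    rewrite -eP1 /cover big_setU1 /=; last by rewrite inE.
    rewrite big_set1 in_setU => /orP[/Aall /orP[]->//|/Ball ->]; first by rewrite orbT.
    by rewrite eqxx !orbT.
  have : (#|[set: 'I_n]| <= #|[set x; y; w]|)%N.
    by apply: subset_leq_card; apply/subsetP => i _; rewrite !inE; exact: cov.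
  rewrite cardsT card_ord => hle.
  have c3 : (#|[set x; y; w]| <= 3)%N.
    apply: leq_trans (leq_card_setU _ _) _; rewrite cards1 addn1 ltnS.
    by apply: leq_trans (leq_card_setU _ _) _; rewrite !cards1.
  by have := leq_trans (n3 er) (leq_trans hle c3); rewrite ltnn.
have yx : y != x by rewrite eq_sym.
have sub : C :\ P1 \subset [set P; P'].
  apply/subsetP => Q hQ; rewrite !inE.
  case: (eqVneq Q P) => //= QP; case: (eqVneq Q P') => //= QP'.
  exfalso.
  have [z hz] := hex Q hQ; have mQ := hmv Q z hQ hz.
  have [hQC _ hQp _] := inC Q hQ.
  have agQ := mQ; case: agQ => agQ _ _.
  case: (eqVneq z x) => [ezx|zx].
    rewrite ezx in mQ agQ.
    have [w' hw'] := hag Q P' hQC hP'C QP'.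
    have [eB' _ _ _] := pair_main hP1 mQ mP' xy hw'.
    have agP := mP; case: agP => agP _ _.
    case/eqP: QP; apply: (det hQp hPp agQ agP).
    by rewrite eB' eB.
  case: (eqVneq z y) => [ezy|zy].
    rewrite ezy in mQ agQ.
    have [w' hw'] := hag Q P hQC hPC QP.
    have [eB' _ _ _] := pair_main hP1 mQ mP yx hw'.
    have agP' := mP'; case: agP' => agP' _ _.
    case/eqP: QP'; apply: (det hQp hP'p agQ agP').
    by rewrite eB' eB.
  have xz : x != z by rewrite eq_sym.
  have QP2 : P != Q by rewrite eq_sym.
  have [w' hw'] := hag P Q hPC hQC QP2.
  have [_ zA _ _] := pair_main hP1 mP mQ xz hw'.
  by have := Aall z zA; rewrite (negbTE zx) (negbTE zy).
have := subset_leq_card sub; rewrite cards2 => h.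
apply: (leq_ltn_trans h); apply: leq_ltn_trans r3; by case: (P != P').
Qed.

End Comb.


Section Cons.
Variables (n r : nat).

Definition blk (tau : 'I_n -> 'I_r) (j : 'I_r) := [set i | tau i == j].
Definition Pt (tau : 'I_n -> 'I_r) := [set blk tau j | j : 'I_r].

Variable tau : 'I_n -> 'I_r.
Hypothesis surj : forall j, exists i, tau i = j.

Lemma blk_inj : injective (blk tau).
Proof.
move=> j j' e; have [i hi] := surj j.
have : i \in blk tau j by rewrite inE hi.
by rewrite e inE hi => /eqP.
Qed.

Lemma Pt_rpart : r_partition r (Pt tau).
Proof.
apply/andP; split; last by rewrite card_imset ?card_ord //; exact: blk_inj.
apply/and3P; split.
- apply/eqP/setP => i; rewrite inE; apply/bigcupP; exists (blk tau (tau i)).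
    by apply/imsetP; exists (tau i).
  by rewrite inE.
- apply/trivIsetP => A B /imsetP[j _ ->] /imsetP[j' _ ->] hne.
  rewrite disjoint_subset; apply/subsetP => i; rewrite !inE => /eqP ->.
  by apply: contraNneq hne => ->.
- apply/imsetP => [[j _ e]]; have [i hi] := surj j.
  have : i \in blk tau j by rewrite inE hi.
  by rewrite -e inE.
Qed.

Lemma Pt_part : part (Pt tau).
Proof. by have /andP[] := Pt_rpart. Qed.

Lemma Pt_pblock i : pblock (Pt tau) i = blk tau (tau i).
Proof.
apply: pb_def; first exact: Pt_part.
  by apply/imsetP; exists (tau i).
by rewrite inE.
Qed.
End Cons.

Section Ext.
Variables (m r : nat) (s : 'I_m -> 'I_r).
Hypothesis ssurj : forall j, exists i, s i = j.

Definition tau (k : 'I_r) (i : 'I_m.+1) : 'I_r :=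
  if unlift ord_max i is Some i' then s i' else k.

Lemma tau_lift k i : tau k (lift ord_max i) = s i.
Proof. by rewrite /tau liftK. Qed.

Lemma tau_max k : tau k ord_max = k.
Proof. by rewrite /tau unlift_none. Qed.

Lemma tau_surj k : forall j, exists i, tau k i = j.
Proof. by move=> j; have [i hi] := ssurj j; exists (lift ord_max i); rewrite tau_lift. Qed.

Lemma Pt_adj k l : adj (Pt (tau k)) (Pt (tau l)) ord_max.
Proof.
rewrite /adj /restr /Pt -!imset_comp; congr (_ :\ _); apply: eq_imset => j /=.
apply/setP => i; rewrite !inE; case: (unliftP ord_max i) => [i' ->|->].
  by rewrite !tau_lift.
by rewrite eqxx !andbF.
Qed.

Lemma Pt_neq k l : k != l -> Pt (tau k) != Pt (tau l).
Proof.
apply: contraNneq => e; have [i' hi'] := ssurj k.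
have : lift ord_max i' \in pblock (Pt (tau k)) ord_max.
  by rewrite Pt_pblock; [rewrite /blk inE tau_lift tau_max hi' | exact: tau_surj].
rewrite e Pt_pblock; last exact: tau_surj.
by rewrite /blk inE tau_lift tau_max hi'.
Qed.

Lemma wl i : widen_ord (leqnSn m) i = lift ord_max i.
Proof. by apply: val_inj; rewrite /= /bump leqNgt ltn_ord. Qed.

Lemma Pt_tv (R : realType) d (p : 'I_m.+1 -> 'rV[R]_d) x0 :
  (forall j, in_conv (fun i => p (lift ord_max i)) [set i | s i == j] x0) ->
  forall k, tverberg_partition p r (Pt (tau k)).
Proof.
move=> hx k; split; first by apply: Pt_rpart; exact: tau_surj.
exists x0 => B /imsetP[j _ ->]; have [w [w0 wout w1 wx]] := hx j.
exists (fun i => if unlift ord_max i is Some i' then w i' else 0%R); split.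
- by move=> i; case: (unlift ord_max i).
- move=> i; case: (unliftP ord_max i) => [i' ->|->]; rewrite ?liftK ?unlift_none //.
  by rewrite inE tau_lift => h; apply: wout; rewrite inE.
- rewrite big_ord_recr /= unlift_none addr0 -w1; apply: eq_bigr => i _.
  by rewrite wl liftK.
- rewrite wx big_ord_recr /= unlift_none scale0r addr0; apply: eq_bigr => i _.
  by rewrite wl liftK.
Qed.
End Ext.


End CombPart.
Import AnaPart CombPart.

Theorem proposition3p4 (R : realType) (r d n : nat) (p : 'I_n -> 'rV[R]_d) :
  (0 < r)%N -> (0 < d)%N -> injective p -> (Tv d r < n)%N ->
  tverberg_clique_number_is p r r.
Proof.
move=> r0 d0 _ hn.
case: n p hn => [//|m] p hn.
have hm : (Tv d r <= m)%N by [].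
have [s [ssurj [x0 hx0]]] := tverberg (fun i => p (lift ord_max i)) r0 hm.
have Tv1 : (1 <= Tv d r)%N by rewrite /Tv addn1.
split.
  exists [set Pt (tau s k) | k : 'I_r]; split; last first.
    by rewrite card_imset ?card_ord // => k l e; apply/eqP; apply: contraT => hkl; move: (Pt_neq ssurj hkl); rewrite e eqxx.
  split.
    by move=> P /imsetP[k _ ->]; apply: Pt_tv.
  move=> P Q /imsetP[k _ ->] /imsetP[l _ ->] hne.
  apply: (adj_dist (x := ord_max)) => //; try exact: Pt_part (tau_surj ssurj _).
  exact: Pt_adj.
move=> C [hT hD]; apply: clique_bound => //.
- by apply: leq_ltn_trans Tv1 hn.
- move=> er; move: hn; rewrite er /Tv => h; apply: leq_trans h.
  by rewrite subSS subn0 muln1 !addn1 !ltnS.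
- by move=> P /hT [].
Qed.
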